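(* Let $d_1,\dots,d_k$ be positive integers. Then the tensor rank of $W_{d_1}\otimes\cdots\otimes W_{d_k}$, viewed as an element of $(\mathbb{C}^2)^{\otimes(d_1+\cdots+d_k)}$, satisfies $$R_{1,\dots,1}(W_{d_1}\otimes\cdots\otimes W_{d_k})\geq d_1+\cdots+d_k-k+1.$$
   Context: With a basis $\{x,y\}$ of $\mathbb{C}^2$, $W_d=\sum_{j=1}^d x\otimes\cdots\otimes x\otimes y\otimes x\otimes\cdots\otimes x\in(\mathbb{C}^2)^{\otimes d}$ ($y$ in the $j$-th position), i.e. the symmetric tensor corresponding to $x^{d-1}y$. $R_{1,\dots,1}$ denotes tensor rank: the minimal $r$ such that the tensor is a sum of $r$ tensors of the form $v_1\otimes\cdots\otimes v_m$ with $v_j\in\mathbb{C}^2$. *)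

(* Defs.v *)
From mathcomp Require Import all_boot all_order all_algebra.
From mathcomp Require Import complex.
From mathcomp Require Import Rstruct.
From Stdlib Require Import Reals.
Set Implicit Arguments. Unset Strict Implicit. Unset Printing Implicit Defensive.
Import Order.TTheory GRing.Theory Num.Theory.
Local Open Scope ring_scope.

Definition C : numClosedFieldType := (Rdefinitions.R)[i].

(* Basis of C^2: false <-> x, true <-> y.  A tensor in (C^2)^{⊗ m} is given by
   its coordinates on the basis e_{b_1}⊗...⊗e_{b_m}, b : 'I_m -> bool. *)
Definition tensor (m : nat) := ('I_m -> bool) -> C.

Definition simple_tensor m (v : 'I_m -> bool -> C) : tensor m :=
  fun b => \prod_(j < m) v j (b j).

(* T is a sum of r simple tensors, i.e. R_{1,...,1}(T) <= r. *)
Definition sum_of_simple m (T : tensor m) (r : nat) : Prop :=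
  exists v : 'I_r -> 'I_m -> bool -> C,
    forall b, T b = \sum_(i < r) simple_tensor (v i) b.

(* W_d = sum_j x ⊗ .. ⊗ y (j-th) ⊗ .. ⊗ x. *)
Definition W (d : nat) : tensor d :=
  fun c => \sum_(j < d) (if [forall i, c i == (i == j)] then 1 else 0).

Fixpoint Wprod (ds : seq nat) : tensor (sumn ds) :=
  match ds return tensor (sumn ds) with
  | [::] => fun _ => 1
  | d :: ds' => fun b =>
      W (fun j => b (lshift (sumn ds') j)) * Wprod (fun j => b (rshift d j))
  end.
Arguments Wprod : clear implicits.
Arguments W : clear implicits.

(* Main.v *)
Require Import Defs.
From mathcomp Require Import all_boot all_order all_algebra zify ring.
From mathcomp Require Import complex Rstruct.
Set Implicit Arguments. Unset Strict Implicit. Unset Printing Implicit Defensive.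
Import Order.TTheory GRing.Theory Num.Theory.
Local Open Scope ring_scope.

Lemma W_eq d (c : 'I_d -> bool) :
  W d c = if (\sum_(p < d | c p) 1 == 1)%N then 1 else 0.
Proof.
rewrite /W.
have -> : (\sum_(p < d | c p) 1)%N = #|[set p | c p]|.
  by rewrite -sum1_card; apply: eq_bigl => p; rewrite inE.
have E j : [forall i, c i == (i == j)] = ([set p | c p] == [set j]).
  apply/forallP/eqP => [H|H i].
    by apply/setP => i; rewrite !inE; apply/eqP/H.
  by move/setP: H => /(_ i); rewrite !inE => ->.
under eq_bigr => j _ do rewrite E.
case: cards1P => [[x ->]|Hn].
  rewrite (bigD1 x) //= eqxx.
  set S := bigop _ _ _. 
  have -> : S = 0.
    rewrite /S; apply: big1 => j Hj.
    by rewrite (inj_eq set1_inj) eq_sym (negbTE Hj).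
  by rewrite addr0.
apply: big1 => j _; case: eqP => // H; by case: Hn; exists j.
Qed.

Definition inblk (ds : seq nat) (g p : nat) :=
  (sumn (take g ds) <= p < sumn (take g.+1 ds))%N.

Lemma Wprod_eq ds b : Wprod ds b = \prod_(g < size ds)
  (if (\sum_(p < sumn ds | inblk ds g p && b p) 1 == 1)%N then 1 else 0).
Proof.
elim: ds b => [|d ds IH] b; first by rewrite big_ord0.
rewrite /= IH W_eq big_ord_recl; congr (_ * _).
  rewrite big_split_ord /= [X in (_ + X)%N]big1 ?addn0.
    by congr (if _ == _ then _ else _); apply: eq_bigl => p; rewrite /inblk /= take0 addn0 (ltn_ord p).
  by move=> p /andP[]; rewrite /inblk /= take0 addn0; lia.
apply: eq_bigr => g _.
rewrite big_split_ord /= [X in (X + _)%N]big1 ?add0n.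
  by congr (if _ == _ then _ else _); apply: eq_bigl => p; rewrite /inblk /= ltn_add2l leq_add2l.
by move=> p /andP[]; rewrite /inblk /= /bump /=; move: (ltn_ord p); lia.
Qed.
Definition upd m (b : 'I_m -> bool) j v := fun p => if p == j then v else b p.
Definition phi m j (be : C) (T : tensor m) : tensor m :=
  fun b => if b j then 0 else T (upd b j false) + be * T (upd b j true).

Lemma simple_upd m (v0 : 'I_m -> bool -> C) b j (be : C) :
  simple_tensor v0 (upd b j false) + be * simple_tensor v0 (upd b j true) =
  (v0 j false + be * v0 j true) * \prod_(l < m | l != j) v0 l (b l).
Proof.
rewrite /simple_tensor (bigD1 j) //= [X in _ + _ * X](bigD1 j) //= /upd eqxx.
have E v : \prod_(l < m | l != j) v0 l (if l == j then v else b l)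
   = \prod_(l < m | l != j) v0 l (b l).
  by apply: eq_bigr => l /negbTE ->.
by rewrite !E mulrDl mulrA.
Qed.

Lemma key m (T : tensor m) r j : sum_of_simple T r ->
  (exists b : 'I_m -> bool, b j /\ T b != 0) ->
  (0 < r)%N /\ exists be, sum_of_simple (phi j be T) r.-1.
Proof.
move=> [v Hv] [b [bj Tb]].
have [i0 Hi0] : exists i0, v i0 j true != 0.
  apply/existsP; apply: contraNT Tb => /existsPn H.
  rewrite Hv; apply/eqP; apply: big1 => i _.
  by rewrite /simple_tensor (bigD1 j) //= bj (eqP (negbNE (H i))) mul0r.
revert v Hv i0 Hi0; case: r => [|r] v Hv i0 Hi0; first by have := ltn_ord i0; rewrite ltn0.
split => //; exists (- v i0 j false / v i0 j true).
set be := (- _ / _).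
exists (fun i l c => if l == j then (if c then 0 else
   v (lift i0 i) j false + be * v (lift i0 i) j true) else v (lift i0 i) l c).
move=> b'; rewrite /phi; case: ifP => bj'.
  symmetry; apply: big1 => i _.
  by rewrite /simple_tensor (bigD1 j) //= eqxx bj' mul0r.
rewrite !Hv mulr_sumr -big_split /= (bigD1_ord i0) //= simple_upd.
rewrite /be (divfK Hi0) subrr mul0r add0r.
apply: eq_bigr => i _.
rewrite simple_upd /simple_tensor [RHS](bigD1 j) //= eqxx bj'.
congr (_ * _); apply: eq_bigr => l /negbTE -> //.
Qed.

Lemma disjE (T : finType) (A B : {set T}) :
  [disjoint A & B] <-> (forall p, p \in A -> p \notin B).
Proof.
split => [H p pA|H]; first by rewrite (disjointFr H pA).
by rewrite disjoint_subset; apply/subsetP => p /H; rewrite inE.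
Qed.

Section Cfg.
Variables m k : nat.

Definition grpF (S : {set 'I_m}) (c : C) (b : 'I_m -> bool) : C :=
  let n := #|[set p in S | b p]| in
  if n == 1%N then 1 else if n == 0%N then c else 0.

Definition cfgT (Z : {set 'I_m}) (S : 'I_k -> {set 'I_m}) (c : 'I_k -> C)
  : tensor m := fun b =>
  (if [forall p in Z, ~~ b p] then 1 else 0) * \prod_(g < k) grpF (S g) (c g) b.

Definition inv (Z : {set 'I_m}) (S : 'I_k -> {set 'I_m}) :=
  [/\ (forall g h, g != h -> [disjoint S g & S h]),
      (forall g, [disjoint S g & Z]) & (forall g, (0 < #|S g|)%N)].

Lemma witness Z S c (w : 'I_k -> 'I_m) : inv Z S -> (forall g, w g \in S g) ->
  cfgT Z S c (fun p => [exists g, p == w g]) = 1.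
Proof.
move=> [Hd HZ Hn] Hw; rewrite /cfgT.
have -> : [forall p in Z, ~~ [exists g, p == w g]].
  apply/forallP => p; apply/implyP => pZ; apply/existsP => [[g /eqP E]].
  by move/disjE: (HZ g) => /(_ p); rewrite pZ E Hw => /(_ isT).
rewrite mul1r big1 // => g _; rewrite /grpF.
have -> : [set p in S g | [exists h, p == w h]] = [set w g].
  apply/setP => p; rewrite !inE; apply/andP/eqP => [[pS /existsP [h /eqP E]]|->].
    case: (eqVneq g h) => [->//|ne].
    by move/disjE: (Hd _ _ ne) => /(_ p pS); rewrite E Hw.
  by split; [apply: Hw | apply/existsP; exists g].
by rewrite cards1.
Qed.

Lemma step Z S c g j be : inv Z S -> j \in S g -> forall b,
  phi j be (cfgT Z S c) b =
  cfgT (j |: Z) (fun h => if h == g then S g :\ j else S h)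
       (fun h => if h == g then c g + be else c h) b.
Proof.
move=> [Hd HZ Hn] Hj b; rewrite /phi /cfgT.
have jZ : j \notin Z by move/disjE: (HZ g) => /(_ j Hj).
have jS h : h != g -> j \notin S h by move=> ne; apply/negP => jh; move/disjE: (Hd _ _ ne) => /(_ j jh); rewrite Hj.
case: ifP => bj.
  rewrite (_ : [forall p in j |: Z, ~~ b p] = false) ?mul0r //.
  by apply/negbTE/forallP => /(_ j); rewrite !inE eqxx bj.
have EZ v : [forall p in Z, ~~ upd b j v p] = [forall p in j |: Z, ~~ b p].
  apply/forallP/forallP => H p; rewrite ?in_setU1.
    case: (eqVneq p j) => [->|ne] /=; first by rewrite bj.
    by have := H p; rewrite /upd (negbTE ne).
  apply/implyP => pZ; have := H p; rewrite in_setU1 pZ orbT /= /upd.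
  by case: eqP => [E|//]; move: jZ; rewrite -E pZ.
have EP v : \prod_(h < k) grpF (S h) (c h) (upd b j v) =
   grpF (S g) (c g) (upd b j v) * \prod_(h < k | h != g) grpF (S h) (c h) b.
  rewrite (bigD1 g) //=; congr (_ * _); apply: eq_bigr => h ne.
  rewrite /grpF; have -> // : [set p in S h | upd b j v p] = [set p in S h | b p].
  apply/setP => p; rewrite !inE /upd; case: eqP => // ->.
  by rewrite (negbTE (jS h ne)).
have EN : \prod_(h < k) grpF (if h == g then S g :\ j else S h)
     (if h == g then c g + be else c h) b =
   grpF (S g :\ j) (c g + be) b * \prod_(h < k | h != g) grpF (S h) (c h) b.
  rewrite (bigD1 g) //= eqxx; congr (_ * _); apply: eq_bigr => h /negbTE ->//.
rewrite !EZ !EP EN.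
set n := #|[set p in S g :\ j | b p]|.
have E0 : #|[set p in S g | upd b j false p]| = n.
  rewrite /n; apply: eq_card => p; rewrite !inE /upd; case: eqP => [->|_] //=.
  by rewrite andbF.
have E1 : #|[set p in S g | upd b j true p]| = n.+1.
  rewrite (cardsD1 j) inE /upd eqxx Hj add1n /n; congr (_.+1).
  by apply: eq_card => p; rewrite !inE /upd; case: eqP.
rewrite /grpF E0 E1 -/n.
set Zc := (if _ then _ else _); set P := \prod_(h < k | h != g) _.
clearbody n; clear E0 E1; by case: n => [|[|n]] /=; ring.
Qed.

Lemma sos_ext m' (T T' : tensor m') r : (forall b, T b = T' b) ->
  sum_of_simple T r -> sum_of_simple T' r.
Proof. by move=> E [v Hv]; exists v => b; rewrite -E. Qed.

Lemma main N : forall Z S c r, inv Z S -> (\sum_(g < k) (#|S g|).-1)%N = N ->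
  sum_of_simple (cfgT Z S c) r -> (N < r)%N.
Proof.
elim: N => [|N IH] Z S c r Hi HN Hs; have [Hd HZ Hn] := Hi;
  have Hex g : exists x, x \in S g by apply/card_gt0P.
all: have [w Hw] : exists w : 'I_k -> 'I_m, forall g, w g \in S g
  by exists (fun g => xchoose (Hex g)) => g; exact: xchooseP.
  case: r Hs => // [[v Hv]].
  by have := Hv (fun p => [exists g, p == w g]); rewrite witness // big_ord0 => /eqP; rewrite oner_eq0.
case: (boolP [exists g, 1 < #|S g|]%N) => [/existsP [g Hg] | /existsPn H]; last first.
  move: HN; rewrite big1 // => g _; have := H g; rewrite -leqNgt; lia.
have [j Hj] := Hex g.
pose w' h := if h == g then j else w h.
have Hw' h : w' h \in S h by rewrite /w'; case: eqP => [->|]. 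
have [r0 [be Hb]] : (0 < r)%N /\ exists be, sum_of_simple (phi j be (cfgT Z S c)) r.-1.
  apply: (key (j:=j) Hs); exists (fun p => [exists h, p == w' h]); split.
    by apply/existsP; exists g; rewrite /w' eqxx.
  by rewrite witness // oner_eq0.
set S' := fun h => if h == g then S g :\ j else S h.
have Hs' := sos_ext (step c be Hi Hj) Hb.
have sub h p : p \in S' h -> p \in S h.
  by rewrite /S'; case: eqP => [->|_] //; rewrite in_setD1 => /andP[].
have Hc := cardsD1 j (S g); rewrite Hj /= in Hc.
have Hi' : inv (j |: Z) S'.
  split.
  - move=> h1 h2 ne; apply/disjE => p /sub p1; apply/negP => /sub.
    by move/disjE: (Hd _ _ ne) => /(_ p p1) /negbTE ->.
  - move=> h; apply/disjE => p pS; rewrite in_setU1 negb_or; apply/andP; split.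
      move: pS; rewrite /S'; case: eqP => [_|ne pS]; first by rewrite in_setD1 => /andP[].
      apply/negP => /eqP E; move/disjE: (Hd _ _ (introN eqP ne)) => /(_ p pS).
      by rewrite E Hj.
    by move/disjE: (HZ h) => /(_ p (sub _ _ pS)).
  - move=> h; rewrite /S'; case: eqP => [_|_]; last exact: Hn.
    by move: Hg; rewrite Hc add1n ltnS.
have HN' : (\sum_(h < k) (#|S' h|).-1)%N = N.
  move: HN; rewrite (bigD1 g) //= [X in _ -> X = N](bigD1 g) //= /S' eqxx.
  have -> : (\sum_(h < k | h != g) (#|if h == g then S g :\ j else S h|).-1
     = \sum_(h < k | h != g) (#|S h|).-1)%N by apply: eq_bigr => h /negbTE ->.
  move: Hg; rewrite Hc add1n ltnS; case: (#|S g :\ j|) => [//|a] _ /=; rewrite addSn => -[<-] //.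
have := IH _ _ _ _ Hi' HN' Hs'; lia.
Qed.
End Cfg.

Lemma blk_card ds g : (g < size ds)%N ->
  (\sum_(p < sumn ds | inblk ds g p) 1)%N = nth 0%N ds g.
Proof.
elim: ds g => [|d ds IH] g //= Hg.
rewrite big_split_ord /=; case: g Hg => [|g] Hg /=.
  rewrite [X in (_ + X)%N]big1 ?addn0.
    rewrite -[RHS](card_ord d) -sum1_card; apply: eq_bigl => p.
    by rewrite /inblk /= take0 addn0 (ltn_ord p).
  by move=> p; rewrite /inblk /= take0 addn0; lia.
rewrite [X in (X + _)%N]big1 ?add0n.
  rewrite -IH //; apply: eq_bigl => p; rewrite /inblk /= ltn_add2l leq_add2l //.
by move=> p; rewrite /inblk /=; move: (ltn_ord p); lia.
Qed.

Lemma meas ds : all (fun d => 0 < d)%N ds ->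
  (\sum_(g < size ds) (nth 0%N ds g).-1 + size ds)%N = sumn ds.
Proof.
elim: ds => [|d ds IH] /=; first by rewrite big_ord0.
move=> /andP[Hd /IH {}IH]; rewrite big_ord_recl /=.
have -> : (\sum_(i < size ds) (nth 0 (d :: ds) (lift ord0 i)).-1 =
  \sum_(i < size ds) (nth 0 ds i).-1)%N by apply: eq_bigr => i _; rewrite lift0.
lia.
Qed.

Lemma sumn_take_mono ds g1 g2 : (g1 <= g2)%N -> (sumn (take g1 ds) <= sumn (take g2 ds))%N.
Proof.
move=> H; rewrite -(subnKC H) takeD sumn_cat; apply: leq_addr.
Qed.

Theorem proposition4p3 (ds : seq nat) :
  all (fun d => 0 < d)%N ds ->
  forall r : nat, sum_of_simple (Wprod ds) r ->
  (sumn ds - size ds + 1 <= r)%N.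
Proof.
move=> Hpos r Hs.
pose S : 'I_(size ds) -> {set 'I_(sumn ds)} := fun g => [set p : 'I_(sumn ds) | inblk ds g p].
have Hcard g : #|S g| = nth 0%N ds g.
  by rewrite -sum1_card -(blk_card (ltn_ord g)); apply: eq_bigl => p; rewrite inE.
have Hs' : sum_of_simple (cfgT set0 S (fun _ => 0)) r.
  apply: sos_ext Hs => b; rewrite Wprod_eq /cfgT.
  have -> : [forall p in set0, ~~ b p] by apply/forallP => q; rewrite inE.
  rewrite mul1r; apply: eq_bigr => i _; rewrite /grpF.
  have -> : #|[set p in S i | b p]| = (\sum_(p < sumn ds | inblk ds i p && b p) 1)%N.
    by rewrite -sum1_card; apply: eq_bigl => q; rewrite !inE.
  by case: ifP => //; case: ifP.
have Hi : inv set0 S.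
  split.
  - move=> g1 h1 ne; apply/disjE => q; rewrite !inE /inblk => /andP[a1 a2]; apply/negP => /andP[b1 b2].
    case: (ltngtP g1 h1) => [lt|lt|/val_inj E]; last by rewrite E eqxx in ne.
      by have := sumn_take_mono ds lt; lia.
    by have := sumn_take_mono ds lt; lia.
  - by move=> g1; apply/disjE => q _; rewrite inE.
  - move=> g1; rewrite Hcard; exact: (all_nthP 0%N Hpos).
have HN : (\sum_(g < size ds) (#|S g|).-1)%N = (sumn ds - size ds)%N.
  under eq_bigr => g1 _ do rewrite Hcard.
  by rewrite -(meas Hpos) addnK.
have := main Hi HN Hs'; rewrite addn1 //.
Qed.
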